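(* For all $n\ge 2$ and $0\le k\le n-2$, $$f(n,k)=\sum_{j=0}^{k}\binom{k-j}{j}(-1)^j\,(n-2-j)!.$$
   Context: A complete non-ambiguous matrix (CNM) of size $n$ is an $n\times n$ matrix $M=(m_{i,j})$ with entries in $\{0,1\}$ whose support $T=\{(i,j): m_{i,j}=1\}$ (whose elements are called vertices) satisfies: (1) $(1,1)\in T$; (2) for every $p=(i,j)\in T$ with $p\neq(1,1)$, exactly one of the following holds: there is $(i',j)\in T$ with $i'<i$, or there is $(i,j')\in T$ with $j'<j$; (3) every row and every column of $M$ contains at least one vertex; (4) define the parent of $p=(i,j)\neq(1,1)$ to be $(i',j)$ with $i'<i$ maximal if such a vertex exists, and otherwise $(i,j')$ with $j'<j$ maximal; then every vertex is the parent of either zero or exactly two vertices. A vertex with no children is a leaf. A CNM of size $n$ is upper-diagonal if its leaves are exactly the positions $(i,n+1-i)$, $1\le i\le n$. For $n\ge 2$ and $0\le k\le n-2$, $f(n,k)$ is the number of upper-diagonal CNMs $M$ of size $n$ with $m_{i,n-i}=0$ for $1\le i\le k$ and $m_{k+1,n-k-1}=1$. Binomial coefficients $\binom{a}{b}$ with $b>a\ge 0$ are $0$. *)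

(* Defs.v *)
From mathcomp Require Import all_boot all_order all_algebra.
Set Implicit Arguments. Unset Strict Implicit. Unset Printing Implicit Defensive.

(* A 0/1 matrix of size n is
   represented by its support T : {set 'I_n * 'I_n}; indices are 0-based,
   so the paper's position (i,j) is (i-1,j-1) here.  A vertex p = (row, col). *)

Definition is_origin n (p : 'I_n * 'I_n) : bool :=
  (val p.1 == 0) && (val p.2 == 0).

Definition has_above n (T : {set 'I_n * 'I_n}) (p : 'I_n * 'I_n) : bool :=
  [exists q in T, (q.2 == p.2) && (val q.1 < val p.1)].

Definition has_left n (T : {set 'I_n * 'I_n}) (p : 'I_n * 'I_n) : bool :=
  [exists q in T, (q.1 == p.1) && (val q.2 < val p.2)].

Definition parent_of n (T : {set 'I_n * 'I_n}) (v p : 'I_n * 'I_n) : bool :=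
  [&& v \in T, p \in T, ~~ is_origin p &
   if has_above T p then
     [&& v.2 == p.2, val v.1 < val p.1 &
         [forall q in T, (q.2 == p.2) ==> ~~ ((val v.1 < val q.1) && (val q.1 < val p.1))]]
   else
     [&& v.1 == p.1, val v.2 < val p.2 &
         [forall q in T, (q.1 == p.1) ==> ~~ ((val v.2 < val q.2) && (val q.2 < val p.2))]]].

Definition children n (T : {set 'I_n * 'I_n}) (v : 'I_n * 'I_n) : {set 'I_n * 'I_n} :=
  [set p in T | parent_of T v p].

Definition is_CNM n (T : {set 'I_n * 'I_n}) : bool :=
  [&& [exists p in T, is_origin p],
      [forall p in T, ~~ is_origin p ==> (has_above T p (+) has_left T p)],
      [forall i : 'I_n, exists p in T, p.1 == i],
      [forall j : 'I_n, exists p in T, p.2 == j] &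
      [forall v in T, (#|children T v| == 0) || (#|children T v| == 2)]].

Definition leaves n (T : {set 'I_n * 'I_n}) : {set 'I_n * 'I_n} :=
  [set v in T | #|children T v| == 0].

Definition upper_diagonal n (T : {set 'I_n * 'I_n}) : bool :=
  leaves T == [set v : 'I_n * 'I_n | val v.1 + val v.2 == n.-1].

Definition has_vtx n (T : {set 'I_n * 'I_n}) (i j : nat) : bool :=
  [exists p in T, (val p.1 == i) && (val p.2 == j)].

(* f(n,k): m_{i,n-i} = 0 for 1<=i<=k and m_{k+1,n-k-1} = 1 (1-based), i.e.
   0-based: no vertex at (r, n-2-r) for r < k, and a vertex at (k, n-2-k). *)
Definition f_count (n k : nat) : nat :=
  #|[set T : {set 'I_n * 'I_n} |
      [&& is_CNM T, upper_diagonal T,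
          [forall r : 'I_n, (val r < k) ==> ~~ has_vtx T (val r) (n - 2 - val r)] &
          has_vtx T k (n - 2 - k)]]|.

(* Main.v *)
Require Import Defs.
From mathcomp Require Import all_boot all_order all_algebra.
From mathcomp Require Import zify.
From Stdlib Require Import FunctionalExtensionality.
Set Implicit Arguments. Unset Strict Implicit. Unset Printing Implicit Defensive.

Definition above (S : nat -> nat -> bool) i j := exists2 i', i' < i & S i' j.
Definition left (S : nat -> nat -> bool) i j := exists2 j', j' < j & S i j'.

Record good (n : nat) (S : nat -> nat -> bool) : Prop := Good {
  good00 : S 0 0;
  goodtri : forall i j, S i j -> i + j <= n.-1;
  gooddiag : forall i, i < n -> S i (n.-1 - i);
  goodx : forall i j, S i j -> (0 < i) || (0 < j) ->
     (above S i j \/ left S i j) /\ ~ (above S i j /\ left S i j) }.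

Section Basic.
Variable n : nat.
Implicit Types T : {set 'I_n * 'I_n}.

Definition hv T i j := has_vtx T i j.

Lemma hv_mem T (p : 'I_n * 'I_n) : p \in T -> hv T (val p.1) (val p.2).
Proof. by move=> pT; apply/existsP; exists p; rewrite pT !eqxx. Qed.

Lemma hvP T i j : hv T i j -> exists p : 'I_n * 'I_n, [/\ p \in T, val p.1 = i & val p.2 = j].
Proof. by case/existsP=> p /and3P[pT /eqP e1 /eqP e2]; exists p. Qed.

Lemma hv_lt T i j : hv T i j -> (i < n) && (j < n).
Proof. by case/hvP=> -[a b] [_ <- <-] /=; rewrite !ltn_ord. Qed.

Lemma hv_memE T (p : 'I_n * 'I_n) : hv T (val p.1) (val p.2) = (p \in T).
Proof.
apply/idP/idP; last exact: hv_mem.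
case/hvP=> q [qT e1 e2]; suff -> : p = q by [].
by case: p q e1 e2 qT => a b [c d] /= e1 e2 _; congr pair; apply: val_inj.
Qed.

Lemma hv_inj T1 T2 : (forall i j, hv T1 i j = hv T2 i j) -> T1 = T2.
Proof. by move=> h; apply/setP=> p; rewrite -!hv_memE h. Qed.

Definition mk (S : nat -> nat -> bool) : {set 'I_n * 'I_n} :=
  [set p : 'I_n * 'I_n | S (val p.1) (val p.2)].

Lemma hv_mk S i j : hv (mk S) i j = [&& i < n, j < n & S i j].
Proof.
apply/idP/idP.
  case/hvP=> -[a b] [/= pT <- <-]; rewrite !ltn_ord /=.
  by move: pT; rewrite inE.
case/and3P=> hi hj hS; apply/existsP; exists (Ordinal hi, Ordinal hj).
by rewrite inE /= hS !eqxx.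
Qed.

Lemma has_aboveP T (p : 'I_n * 'I_n) :
  reflect (above (hv T) p.1 p.2) (has_above T p).
Proof.
apply: (iffP existsP).
  case=> q /and3P[qT /eqP e2 lt1]; exists (val q.1) => //.
  by rewrite -e2; apply: hv_mem.
case=> i lti /hvP [q [qT e1 e2]]; exists q; rewrite qT /= e1 lti andbT.
by apply/eqP/val_inj.
Qed.

Lemma has_leftP T (p : 'I_n * 'I_n) :
  reflect (left (hv T) p.1 p.2) (has_left T p).
Proof.
apply: (iffP existsP).
  case=> q /and3P[qT /eqP e2 lt1]; exists (val q.2) => //.
  by rewrite -e2; apply: hv_mem.
case=> i lti /hvP [q [qT e1 e2]]; exists q; rewrite qT /= e2 lti andbT.
by apply/eqP/val_inj.
Qed.

End Basic.

Lemma valE n (x : 'I_n) : val x = nat_of_ord x. Proof. by []. Qed.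
Ltac nrm := repeat match goal with
  | H : context [@isSub.val_subdef _ _ _ _ ?x] |- _ => rewrite (valE x) in H
  | |- context [@isSub.val_subdef _ _ _ _ ?x] => rewrite (valE x)
  end.

Section Char.
Variable n : nat.
Implicit Types T : {set 'I_n * 'I_n}.

Lemma parent_sum T (v p : 'I_n * 'I_n) : parent_of T v p ->
  val v.1 + val v.2 < val p.1 + val p.2.
Proof.
case/and4P=> _ _ _; case: ifP => _.
  by case/and3P=> /eqP -> lt _; rewrite ltn_add2r.
by case/and3P=> /eqP -> lt _; rewrite ltn_add2l.
Qed.

Lemma pair_eq (p q : 'I_n * 'I_n) : val p.1 = val q.1 -> val p.2 = val q.2 -> p = q.
Proof. by case: p q => a b [c d] /= e1 e2; congr pair; apply: val_inj. Qed.

Section Good.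
Variable T : {set 'I_n * 'I_n}.
Hypothesis gT : good n (hv T).

Lemma children_diag (v : 'I_n * 'I_n) : val v.1 + val v.2 = n.-1 -> children T v = set0.
Proof.
move=> e; apply/setP=> w; rewrite !inE; apply/negP=> /andP[wT pw].
have := parent_sum pw; have := goodtri gT (hv_mem wT); lia.
Qed.

Lemma children_two (v : 'I_n * 'I_n) : v \in T -> val v.1 + val v.2 < n.-1 ->
  #|children T v| = 2.
Proof.
move=> vT lt.
have exd : exists i, (val v.1 < i) && hv T i (val v.2).
  exists (n.-1 - val v.2); apply/andP; split; first lia.
  have hl : n.-1 - val v.2 < n by have := ltn_ord v.2; lia.
  have := gooddiag gT hl.
  by have -> : n.-1 - (n.-1 - val v.2) = val v.2 by have := ltn_ord v.2; lia.
have exr : exists j, (val v.2 < j) && hv T (val v.1) j.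
  exists (n.-1 - val v.1); apply/andP; split; first lia.
  by have := gooddiag gT (ltn_ord v.1).
case: (ex_minnP exd) => i0 /andP[lti0 hi0] mini0.
case: (ex_minnP exr) => j0 /andP[ltj0 hj0] minj0.
have i0n : i0 < n by case/andP: (hv_lt hi0).
have j0n : j0 < n by case/andP: (hv_lt hj0).
pose d : 'I_n * 'I_n := (Ordinal i0n, v.2).
pose r : 'I_n * 'I_n := (v.1, Ordinal j0n).
have dT : d \in T by rewrite -hv_memE.
have rT : r \in T by rewrite -hv_memE.
have vhv := hv_mem vT.
have abd : has_above T d by apply/has_aboveP; exists (val v.1).
have lr : has_left T r by apply/has_leftP; exists (val v.2).
have nabr : ~~ has_above T r.
  apply/negP=> /has_aboveP ab.
  have : (0 < val r.1) || (0 < val r.2) by rewrite /= orbC; apply/orP; left; lia.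
  move/(goodx gT (hv_mem rT)) => [_ H]; apply: H; split=> //.
  exact/has_leftP.
have -> : children T v = [set d; r].
  apply/setP=> w; rewrite !inE; apply/idP/idP.
    case/andP=> wT /and4P[_ _ nw]; case: ifP=> abw.
      case/and3P=> /eqP e2 l1 /forallP fa.
      apply/orP; left; apply/eqP; apply: pair_eq; last by rewrite /= e2.
      rewrite /=.
      have := mini0 (val w.1); rewrite l1 /=.
      have -> : hv T (val w.1) (val v.2) by rewrite e2; apply: hv_mem.
      move=> /(_ isT) le.
      have := fa d; rewrite dT /= e2 eqxx /= negb_and -!leqNgt.
      move=> hh; nrm; lia.
    case/and3P=> /eqP e1 l2 /forallP fa.
    apply/orP; right; apply/eqP; apply: pair_eq; first by rewrite /= e1.
    rewrite /=.
    have := minj0 (val w.2); rewrite l2 /=.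
    have -> : hv T (val v.1) (val w.2) by rewrite e1; apply: hv_mem.
    move=> /(_ isT) le.
    have := fa r; rewrite rT /= e1 eqxx /= negb_and -!leqNgt.
    move=> hh; nrm; lia.
  case/orP=> /eqP ->.
    rewrite dT /parent_of vT dT /is_origin /= abd eqxx lti0 /=.
    have -> : (i0 == 0) = false by apply/negbTE; lia.
    apply/forallP=> q; apply/implyP=> qT; apply/implyP=> /eqP e2.
    apply/negP=> /andP[a b].
    have := mini0 (val q.1); rewrite a /=.
    have -> : hv T (val q.1) (val v.2) by rewrite -e2; apply: hv_mem.
    move=> /(_ isT); lia.
  rewrite rT /parent_of vT rT /is_origin /= (negbTE nabr) eqxx ltj0 /=.
  have -> : (j0 == 0) = false by apply/negbTE; lia.
  rewrite andbF /=.
  apply/forallP=> q; apply/implyP=> qT; apply/implyP=> /eqP e1.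
  apply/negP=> /andP[a b].
  have := minj0 (val q.2); rewrite a /=.
  have -> : hv T (val v.1) (val q.2) by rewrite -e1; apply: hv_mem.
  move=> /(_ isT); lia.
rewrite cards2; suff : d != r by move=> ->.
apply/negP=> /eqP/(congr1 (fun x => val x.1)) /= hh; nrm; lia.
Qed.
End Good.

End Char.

Section UD.
Variable n : nat.
Implicit Types T : {set 'I_n * 'I_n}.

Lemma ud_fwd T : is_CNM T -> upper_diagonal T -> good n (hv T).
Proof.
case/and5P=> ex1 /forallP fa2 _ _ /forallP fa4 /eqP ud.
have leafE (v : 'I_n * 'I_n) : (v \in leaves T) = (val v.1 + val v.2 == n.-1).
  by rewrite ud inE.
have child (v : 'I_n * 'I_n) : v \in T -> val v.1 + val v.2 != n.-1 ->
    exists2 w, w \in T & parent_of T v w.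
  move=> vT ne; move: ne; rewrite -leafE inE vT /= -lt0n card_gt0.
  by case/set0Pn=> w; rewrite inE => /andP[wT pw]; exists w.
have tri : forall m (v : 'I_n * 'I_n), v \in T ->
    n.*2 - (val v.1 + val v.2) <= m -> val v.1 + val v.2 <= n.-1.
  elim=> [|m IH] v vT.
    have := ltn_ord v.1; have := ltn_ord v.2; move=> h1 h2 h3; nrm; lia.
  move=> hm; case: (leqP (val v.1 + val v.2) n.-1) => // gt.
  have [w wT pw] := child v vT (negbT (gtn_eqF gt)).
  have ps := parent_sum pw.
  have := IH w wT; move=> hw; have h := ltn_ord w.1; nrm; lia.
split.
- by case/existsP: ex1 => p /andP[pT /andP[/eqP e1 /eqP e2]]; have := hv_mem pT; rewrite e1 e2.
- move=> i j /hvP [p [pT e1 e2]]; rewrite -e1 -e2; apply: (tri _ p pT (leqnn _)).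
- move=> i lti; have hl : n.-1 - i < n by lia.
  pose v : 'I_n * 'I_n := (Ordinal lti, Ordinal hl).
  have : v \in leaves T by rewrite leafE /=; apply/eqP; lia.
  by rewrite inE => /andP[vT _]; have := hv_mem vT.
- move=> i j /hvP [p [pT e1 e2]] nz.
  have := fa2 p; rewrite pT implyTb.
  have -> : ~~ is_origin p by rewrite /is_origin e1 e2 negb_and -!lt0n -orbC orbC.
  rewrite implyTb -e1 -e2.
  case: (has_aboveP T p) => [a|na]; case: (has_leftP T p) => [l|nl] //= _.
  + by split; [left | case].
  + by split; [right | case].
Qed.

Lemma ud_bwd T : 0 < n -> good n (hv T) -> is_CNM T && upper_diagonal T.
Proof.
move=> n0 gT.
have tri (v : 'I_n * 'I_n) : v \in T -> val v.1 + val v.2 <= n.-1.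
  by move/hv_mem/(goodtri gT).
have leafE (v : 'I_n * 'I_n) : (v \in leaves T) = (val v.1 + val v.2 == n.-1).
  rewrite inE; apply/idP/idP.
    case/andP=> vT /eqP c0; have := tri v vT; rewrite leq_eqVlt; case/orP=> // lt.
    by rewrite (children_two gT vT lt) in c0.
  move/eqP=> e; rewrite (children_diag gT e) cards0 andbT -hv_memE.
  have -> : val v.2 = n.-1 - val v.1 by lia.
  by have := gooddiag gT (ltn_ord v.1).
apply/andP; split; last first.
  by apply/eqP/setP=> v; rewrite leafE inE.
apply/and5P; split.
- have /hvP [p [pT e1 e2]] := good00 gT.
  by apply/existsP; exists p; rewrite pT /is_origin e1 e2.
- apply/forallP=> p; apply/implyP=> pT; apply/implyP=> np.
  have nz : (0 < val p.1) || (0 < val p.2).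
    by move: np; rewrite /is_origin negb_and -!lt0n.
  have [[a|l] na] := goodx gT (hv_mem pT) nz.
    have -> : has_above T p by apply/has_aboveP.
    by case: (has_leftP T p) => // l; case: na.
  have -> : has_left T p by apply/has_leftP.
  by case: (has_aboveP T p) => // a; case: na.
- apply/forallP=> i; have hl : n.-1 - i < n by lia.
  apply/existsP; exists (i, Ordinal hl); rewrite eqxx andbT -hv_memE /=.
  exact: (gooddiag gT (ltn_ord i)).
- apply/forallP=> j; have hl : n.-1 - j < n by lia.
  apply/existsP; exists (Ordinal hl, j); rewrite eqxx andbT -hv_memE /=.
  have := gooddiag gT hl.
  by have -> : n.-1 - (n.-1 - j) = j by have := ltn_ord j; lia.
- apply/forallP=> v; apply/implyP=> vT.
  have := tri v vT; rewrite leq_eqVlt; case/orP=> [/eqP e|lt].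
    by rewrite (children_diag gT e) cards0.
  by rewrite (children_two gT vT lt) orbT.
Qed.

Lemma UD_good T : 0 < n -> (is_CNM T && upper_diagonal T) <-> good n (hv T).
Proof.
move=> n0; split; first by case/andP; apply: ud_fwd.
exact: ud_bwd.
Qed.

End UD.

Definition un (g i : nat) := if g <= i then i.+1 else i.
Definition sh (g i : nat) := if g < i then i.-1 else i.

Lemma sh_un g i : sh g (un g i) = i.
Proof. rewrite /un /sh; case: (leqP g i) => h; case: ifP => //; lia. Qed.
Lemma un_neq g i : un g i != g.
Proof. rewrite /un; case: (leqP g i) => h; apply/eqP; lia. Qed.
Lemma un_sh g i : i != g -> un g (sh g i) = i.
Proof. rewrite /un /sh => /eqP ne; case: (ltngtP g i) => h //; case: ifP => //; lia. Qed.
Lemma un_lt g i j : (un g i < un g j) = (i < j).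
Proof. rewrite /un; case: (leqP g i); case: (leqP g j) => *; apply/idP/idP; lia. Qed.
Lemma un_ge g i : i <= un g i. Proof. rewrite /un; case: ifP => _; lia. Qed.
Lemma un_le g i : un g i <= i.+1. Proof. rewrite /un; case: ifP => _; lia. Qed.

Lemma ex_un (P : nat -> Prop) g i :
  (exists2 x, x < i & P (un g x)) <-> (exists2 y, y < un g i & y <> g /\ P y).
Proof.
split.
  case=> x lt px; exists (un g x); first by rewrite un_lt.
  by split=> //; apply/eqP; apply: un_neq.
case=> y lt [ne py]; exists (sh g y).
  by rewrite -(un_lt g) un_sh //; apply/eqP.
by rewrite un_sh //; apply/eqP.
Qed.

Definition tr (S : nat -> nat -> bool) i j := S j i.

Lemma good_tr n S : good n S -> good n (tr S).
Proof.
case=> g0 gt gd gx; split.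
- by [].
- by move=> i j /gt; lia.
- move=> i lt; rewrite /tr.
  have hl : n.-1 - i < n by lia.
  by have := gd _ hl; have -> : n.-1 - (n.-1 - i) = i by lia.
- move=> i j /gx h nz; rewrite /tr; have := h; rewrite orbC => /(_ nz).
  by case=> [[a|l] na]; split; [right|move=> [] x y; apply: na|left|move=> [] x y; apply: na].
Qed.


Lemma sh_small g i : i < g.+1 -> sh g i = i.
Proof. by move=> h; rewrite /sh ltnNge -ltnS h. Qed.

Section Cherry.
Variables m r : nat.
Hypothesis rm : r < m.
Notation c := (m.-1 - r).

Definition ins (S : nat -> nat -> bool) i j :=
  if i == r.+1 then j == c else if j == c.+1 then i == r
  else S (sh r.+1 i) (sh c.+1 j).
Definition del (S : nat -> nat -> bool) i j := S (un r.+1 i) (un c.+1 j).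

Lemma del_ins S i j : del (ins S) i j = S i j.
Proof. by rewrite /del /ins (negbTE (un_neq _ _)) (negbTE (un_neq _ _)) !sh_un. Qed.

Section Big.
Variable S : nat -> nat -> bool.
Hypothesis gS : good m.+1 S.
Hypothesis Src : S r c.

Lemma row_alone j : S r.+1 j = (j == c).
Proof.
have dg : S r.+1 c.
  have h : r.+1 < m.+1 by lia.
  by have := gooddiag gS h; have -> : m.+1.-1 - r.+1 = c by lia.
apply/idP/eqP => [h|-> //].
case: (ltngtP j c) => // lt.
  have [[a|l] na] := goodx gS dg (isT : (0 < r.+1) || _).
    by case: na; split=> //; exists j.
  have := goodx gS dg (isT : (0 < r.+1) || _) => -[_ na']; case: na'; split => //.
  by exists r.
have := goodtri gS h; lia.
Qed.

Lemma col_alone i : S i c.+1 = (i == r).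
Proof.
have dg : S r c.+1.
  have h : r < m.+1 by lia.
  by have := gooddiag gS h; have -> : m.+1.-1 - r = c.+1 by lia.
apply/idP/eqP => [h|-> //].
have nz : (0 < r) || (0 < c.+1) by rewrite orbT.
case: (ltngtP i r) => // lt.
  have [_ na] := goodx gS dg nz; case: na; split.
    by exists i.
  by exists c.
have := goodtri gS h; lia.
Qed.

Lemma ins_del i j : ins (del S) i j = S i j.
Proof.
rewrite /ins; case: eqP => [->|ne1]; first by rewrite row_alone.
case: eqP => [->|ne2]; first by rewrite col_alone.
by rewrite /del !un_sh //; apply/eqP.
Qed.

Lemma above_del i j : above (del S) i j <-> above S (un r.+1 i) (un c.+1 j).
Proof.
rewrite /above /del; split.
  by move/(ex_un (fun x => S x (un c.+1 j))) => -[y lt [_ h]]; exists y.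
case=> y lt h; apply/(ex_un (fun x => S x (un c.+1 j))).
case: (eqVneq y r.+1) => [e|ne]; last by exists y => //; split=> //; apply/eqP.
move: h; rewrite e row_alone => /eqP e2; exists r; first lia.
by split; [lia | rewrite e2].
Qed.

Lemma left_del i j : left (del S) i j <-> left S (un r.+1 i) (un c.+1 j).
Proof.
rewrite /left /del; split.
  by move/(ex_un (fun x => S (un r.+1 i) x)) => -[y lt [_ h]]; exists y.
case=> y lt h; apply/(ex_un (fun x => S (un r.+1 i) x)).
case: (eqVneq y c.+1) => [e|ne]; last by exists y => //; split=> //; apply/eqP.
move: h; rewrite e col_alone => /eqP e2; exists c; first lia.
by split; [lia | rewrite e2].
Qed.

Lemma good_del : good m (del S).
Proof.
split.
- by rewrite /del /un !ltn0; apply: (good00 gS).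
- move=> i j /(goodtri gS); rewrite /un; case: ifP; case: ifP => *; try lia.
- have gd (a b : nat) : a < m.+1 -> a + b = m -> S a b.
    by move=> h1 h2; have := gooddiag gS h1; have -> : m.+1.-1 - a = b by lia.
  move=> i lt; rewrite /del /un; case: leqP => h1; case: leqP => h2; try lia;
    by [apply: gd; lia | have -> : i = r by lia].
- move=> i j h nz.
  have nz' : (0 < un r.+1 i) || (0 < un c.+1 j).
    by move: nz; rewrite /un; case: ifP; case: ifP => *; lia.
  have [o x] := goodx gS h nz'.
  split.
    by case: o => [/above_del|/left_del]; [left|right].
  by case=> /above_del a /left_del l; apply: x.
Qed.
End Big.

Section Small.
Variable S : nat -> nat -> bool.
Hypothesis gS : good m S.

Lemma Src_small : S r c.
Proof. exact: (gooddiag gS rm). Qed.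

Lemma above_ins i j : i != r.+1 -> j != c.+1 ->
  (above (ins S) i j <-> above S (sh r.+1 i) (sh c.+1 j)).
Proof.
move=> ne1 ne2; rewrite /above; split.
  case=> i' lt; rewrite /ins (negbTE ne2); case: eqP => [e /eqP ej|/eqP ne3 h].
    subst i' j; exists r; last by rewrite /sh ltnNge leqnSn /=; exact: Src_small.
    rewrite /sh; case: ifP => //; move: ne1 => /eqP; lia.
  exists (sh r.+1 i') => //.
  by rewrite -(un_lt r.+1) !un_sh.
case=> x lt h; exists (un r.+1 x).
  by rewrite -(un_sh ne1) un_lt.
by rewrite /ins (negbTE (un_neq _ _)) (negbTE ne2) sh_un.
Qed.

Lemma left_ins i j : i != r.+1 -> j != c.+1 ->
  (left (ins S) i j <-> left S (sh r.+1 i) (sh c.+1 j)).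
Proof.
move=> ne1 ne2; rewrite /left; split.
  case=> j' lt; rewrite /ins (negbTE ne1); case: eqP => [e /eqP ei|/eqP ne3 h].
    subst j' i; exists c.
      rewrite /sh; case: ifP => //; move: ne2 => /eqP; lia.
    have -> : sh r.+1 r = r by rewrite /sh ltnNge leqnSn.
    exact: Src_small.
  exists (sh c.+1 j') => //.
  by rewrite -(un_lt c.+1) !un_sh.
case=> x lt h; exists (un c.+1 x).
  by rewrite -(un_sh ne2) un_lt.
by rewrite /ins (negbTE (un_neq _ _)) (negbTE ne1) sh_un.
Qed.

Lemma good_ins : good m.+1 (ins S).
Proof.
have Src := Src_small.
have gds (a b : nat) : a < m -> a + b = m.-1 -> S a b.
  by move=> h1 h2; have := gooddiag gS h1; have -> : m.-1 - a = b by lia.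
have e1 : (r == r.+1) = false by apply: ltn_eqF.
have e2 : (c == c.+1) = false by apply: ltn_eqF.
have hrc : ins S r c by rewrite /ins e1 e2 !sh_small.
split.
- by rewrite /ins /sh /=; exact: (good00 gS).
- move=> i j; rewrite /ins; case: eqP => [-> /eqP ->|ne1]; first lia.
  case: eqP => [-> /eqP ->|ne2]; first lia.
  move/(goodtri gS); rewrite /sh; case: ltnP => h1; case: ltnP => h2 *; lia.
- move=> i lt; rewrite /ins; case: eqP => [->|ne1]; first by apply/eqP; lia.
  case: eqP => [e|ne2]; first by apply/eqP; lia.
  rewrite /sh; case: ltnP => h1; case: ltnP => h2; try lia; apply: gds; lia.
- move=> i j h nz.
  case: (eqVneq i r.+1) => [ei|ne1].
    move: h; rewrite /ins ei eqxx => /eqP ej; subst i j.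
    split; first by left; exists r.
    case=> _ [j' lt]; rewrite /ins eqxx => /eqP; lia.
  case: (eqVneq j c.+1) => [ej|ne2].
    move: h; rewrite /ins (negbTE ne1) ej eqxx => /eqP ei; subst i j.
    split; first by right; exists c.
    case=> -[i' lt]; rewrite /ins eqxx; case: eqP => [e _|_ /eqP]; lia.
  move: h; rewrite /ins (negbTE ne1) (negbTE ne2) => h.
  have nz' : (0 < sh r.+1 i) || (0 < sh c.+1 j).
    by move: nz; rewrite /sh; case: ifP; case: ifP => *; lia.
  have [o x] := goodx gS h nz'.
  split.
    by case: o => [/(above_ins ne1 ne2)|/(left_ins ne1 ne2)]; [left|right].
  by case=> /(above_ins ne1 ne2) a /(left_ins ne1 ne2) l; apply: x.
Qed.
End Small.

End Cherry.

Definition sw (r i : nat) := if i == r then r.+1 else if i == r.+1 then r else i.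

Lemma sw_cases r i : [\/ i = r /\ sw r i = r.+1, i = r.+1 /\ sw r i = r |
   [/\ i <> r, i <> r.+1 & sw r i = i]].
Proof.
rewrite /sw; case: (eqVneq i r) => [->|/eqP h1]; first by constructor 1.
case: (eqVneq i r.+1) => [->|/eqP h2]; first by constructor 2.
by constructor 3.
Qed.

Lemma sw_r r : sw r r = r.+1. Proof. by rewrite /sw eqxx. Qed.
Lemma sw_r1 r : sw r r.+1 = r.
Proof. by rewrite /sw (gtn_eqF (ltnSn r)) eqxx. Qed.

Lemma swK r i : sw r (sw r i) = i.
Proof.
case: (sw_cases r i) => [[-> ->]|[-> ->]|[h1 h2 ->]]; rewrite ?sw_r ?sw_r1 //.
by rewrite /sw; case: eqP => //; case: eqP.
Qed.

Lemma ex_sw (P : nat -> bool) r i : P (sw r i) -> ~~ (P r && P r.+1) ->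
  (exists2 x, x < i & P (sw r x)) <-> (exists2 y, y < sw r i & P y).
Proof.
move=> Pi nb; split.
  case=> x lt px; exists (sw r x) => //.
  case: (sw_cases r i) => [[e1 e2]|[e1 e2]|[e1 e2 e3]];
  case: (sw_cases r x) => [[f1 f2]|[f1 f2]|[f1 f2 f3]]; try lia.
  by subst; rewrite e2 in Pi; rewrite f2 in px; rewrite Pi px in nb.
case=> y lt py; exists (sw r y); last by rewrite swK.
case: (sw_cases r i) => [[e1 e2]|[e1 e2]|[e1 e2 e3]];
case: (sw_cases r y) => [[f1 f2]|[f1 f2]|[f1 f2 f3]]; try lia.
by subst; rewrite e2 in Pi; rewrite Pi py in nb.
Qed.

Lemma sw0 r : 0 < r -> sw r 0 = 0.
Proof. by move=> h; rewrite /sw; case: eqP => [|_]; [lia|]. Qed.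

Section Swap.
Variables n r : nat.
Notation a := (n - 2 - r).
Definition swp (S : nat -> nat -> bool) i j := S (sw r i) (sw a j).

Lemma swpK S i j : swp (swp S) i j = S i j.
Proof. by rewrite /swp !swK. Qed.

Variable S : nat -> nat -> bool.
Hypothesis gS : good n S.
Hypothesis r1 : 0 < r.
Hypothesis rn : r.+3 <= n.
Hypothesis nra : ~~ S r a.
Hypothesis dcol : forall j, ~~ (S r j && S r.+1 j).
Hypothesis drow : forall i, ~~ (S i a && S i a.+1).

Lemma good_swp : good n (swp S).
Proof.
have a1 : 0 < a by lia.
split.
- by rewrite /swp !sw0 //; apply: (good00 gS).
- move=> i j; rewrite /swp => h; have := goodtri gS h.
  case: (sw_cases r i) => [[e1 e2]|[e1 e2]|[e1 e2 e3]];
  case: (sw_cases a j) => [[f1 f2]|[f1 f2]|[f1 f2 f3]]; rewrite ?e2 ?f2 in h *; try lia.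
- have gd (x y : nat) : x < n -> x + y = n.-1 -> S x y.
    by move=> h1 h2; have := gooddiag gS h1; have -> : n.-1 - x = y by lia.
  move=> i lt; rewrite /swp.
  case: (sw_cases r i) => [[e1 e2]|[e1 e2]|[e1 e1' e2]]; rewrite e2;
  case: (sw_cases a (n.-1 - i)) => [[f1 f2]|[f1 f2]|[f1 f1' f2]]; rewrite f2; apply: gd; lia.
- move=> i j h nz.
  have nz' : (0 < sw r i) || (0 < sw a j).
    move: nz; case: (sw_cases r i) => [[e1 e2]|[e1 e2]|[e1 e2 e3]];
    case: (sw_cases a j) => [[f1 f2]|[f1 f2]|[f1 f2 f3]]; rewrite ?e2 ?f2; lia.
  have [o x] := goodx gS h nz'.
  have ab : above (swp S) i j <-> above S (sw r i) (sw a j).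
    rewrite /above /swp; apply: (ex_sw (P := fun y => S y (sw a j))) => //.
  have lf : left (swp S) i j <-> left S (sw r i) (sw a j).
    rewrite /left /swp; apply: (ex_sw (P := fun y => S (sw r i) y)) => //.
  rewrite ab lf; split => //.
Qed.

End Swap.

Section Types.
Variables (n r : nat) (S : nat -> nat -> bool).
Hypothesis gS : good n S.
Hypothesis rn : r.+1 < n.
Notation a := (n - 2 - r).

Let e1 : n.-1 - r = a.+1. Proof. lia. Qed.
Let e2 : n.-1 - r.+1 = a. Proof. lia. Qed.

Lemma dg1 : S r a.+1.
Proof. by have := gooddiag gS (ltnW rn); rewrite e1. Qed.
Let nz1 : (0 < r) || (0 < a.+1). Proof. by rewrite orbT. Qed.

Lemma dg2 : S r.+1 a.
Proof. by have := gooddiag gS rn; rewrite e2. Qed.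

Lemma A1 i : ~ above S r a.+1 -> S i a.+1 -> i = r.
Proof.
move=> na h; case: (ltngtP i r) => // lt; first by case: na; exists i.
have := goodtri gS h; lia.
Qed.

Lemma A2 j : above S r.+1 a -> S r.+1 j -> j = a.
Proof.
move=> ab h; case: (ltngtP j a) => // lt; last by have := goodtri gS h; lia.
have [_ na] := goodx gS dg2 (isT : (0 < r.+1) || _).
by case: na; split=> //; exists j.
Qed.

Lemma A3 j : above S r a.+1 -> S r j -> j = a.+1.
Proof.
move=> ab h; case: (ltngtP j a.+1) => // lt; last by have := goodtri gS h; lia.
have [_ na] := goodx gS dg1 nz1.
by case: na; split=> //; exists j.
Qed.

Lemma A4 i : ~ above S r.+1 a -> S i a -> i = r.+1.
Proof.
move=> na h; case: (ltngtP i r.+1) => // lt; first by case: na; exists i.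
have := goodtri gS h; lia.
Qed.

Lemma D2_LU : S r a -> ~ above S r a.+1 /\ above S r.+1 a.
Proof.
move=> h; split; last by exists r.
move=> ab; have [_ na] := goodx gS dg1 nz1.
by case: na; split=> //; exists a.
Qed.

Lemma LU_swap : ~ above S r a.+1 -> above S r.+1 a -> ~~ S r a ->
  [/\ good n (swp n r S), above (swp n r S) r a.+1 & ~ above (swp n r S) r.+1 a].
Proof.
move=> na ab nra.
have r1 : 0 < r.
  case: (posnP r) => // r0; case: ab => i' lt h.
  have e : i' = r by lia.
  by move: h; rewrite e (negbTE nra).
have r3 : r.+3 <= n.
  case: (leqP r.+3 n) => // h3.
  have a0 : a = 0 by lia.
  have [[ab'|[j' lt h]] _] := goodx gS dg1 nz1.
    by case: na.
  have e : j' = a by lia.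
  by move: h; rewrite e (negbTE nra).
split.
- apply: good_swp => //.
  + by move=> j; apply/negP=> /andP[p q]; move: nra; rewrite -(A2 ab q) p.
  + by move=> i; apply/negP=> /andP[p q]; move: nra; rewrite -{1}(A1 na q) p.
- case: ab => i' lt h; exists i'.
    by case: (ltngtP i' r) => // e; last (by move: h; rewrite e (negbTE nra)); lia.
  rewrite /swp /sw.
  have -> : (i' == r) = false by apply/negbTE/negP=> /eqP e; move: h; rewrite e (negbTE nra).
  have -> : (i' == r.+1) = false by apply/negbTE/negP=> /eqP e; lia.
  by rewrite (gtn_eqF (ltnSn _)) eqxx.
- case=> i' lt; rewrite /swp.
  have -> : sw a a = a.+1 by rewrite /sw eqxx.
  move/(A1 na); rewrite /sw; case: eqP => [e|ne]; first lia.
  by case: eqP; lia.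
Qed.

Lemma UL_swap : above S r a.+1 -> ~ above S r.+1 a ->
  [/\ good n (swp n r S), ~ above (swp n r S) r a.+1, above (swp n r S) r.+1 a
    & ~~ swp n r S r a].
Proof.
move=> ab na.
have tri2 : ~~ S r.+1 a.+1 by apply/negP=> /(goodtri gS); lia.
have r1 : 0 < r by case: ab => i' lt _; lia.
have r3 : r.+3 <= n.
  case: (leqP r.+3 n) => // h3.
  have a0 : a = 0 by lia.
  have [[ab'|[j' lt h]] _] := goodx gS dg2 (isT : (0 < r.+1) || _).
    by case: na.
  lia.
have nra : ~~ S r a by apply/negP=> /(A3 ab); lia.
split.
- apply: good_swp => //.
  + by move=> j; apply/negP=> /andP[p q]; move: tri2; rewrite -(A3 ab p) q.
  + by move=> i; apply/negP=> /andP[p q]; move: tri2; rewrite -(A4 na p) q.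
- case=> i' lt; rewrite /swp.
  have -> : sw a a.+1 = a by rewrite /sw (gtn_eqF (ltnSn a)) eqxx.
  rewrite /sw; have -> : (i' == r) = false by apply/negbTE; lia.
  have -> : (i' == r.+1) = false by apply/negbTE; lia.
  by move=> h; case: na; exists i' => //; lia.
- case: ab => i' lt h; exists i'; first lia.
  rewrite /swp /sw.
  have -> : (i' == r) = false by apply/negbTE; lia.
  have -> : (i' == r.+1) = false by apply/negbTE; lia.
  by rewrite eqxx.
- by rewrite /swp /sw eqxx eqxx.
Qed.

End Types.

Lemma card_bij (T1 T2 : finType) (A : {set T1}) (B : {set T2}) (f : T1 -> T2) (g : T2 -> T1) :
  {in A, forall x, f x \in B} -> {in B, forall y, g y \in A} ->
  {in A, cancel f g} -> {in B, cancel g f} -> #|A| = #|B|.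
Proof.
move=> fA gB fg gf.
rewrite -(card_in_imset (f := f)); last by move=> x y xA yA e; rewrite -(fg x xA) -(fg y yA) e.
suff -> : f @: A = B by [].
apply/setP=> y; apply/imsetP/idP.
  by case=> x xA ->; apply: fA.
by move=> yB; exists (g y); [apply: gB | rewrite gf].
Qed.

Lemma good_ext n S S' : S = S' -> good n S -> good n S'.
Proof. by move=> ->. Qed.

Section Plumb.
Variable n : nat.
Implicit Types T : {set 'I_n * 'I_n}.

Lemma hv_mk_good S : 0 < n -> good n S -> hv (mk n S) = S.
Proof.
move=> n0 gS; apply: functional_extensionality => i; apply: functional_extensionality => j.
rewrite hv_mk; apply/idP/idP; first by case/and3P.
move=> h; have := goodtri gS h => t.
rewrite h andbT; apply/andP; split; lia.
Qed.

Lemma mk_hv T : mk n (hv T) = T.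
Proof.
apply: hv_inj => i j; rewrite hv_mk; apply/idP/idP; first by case/and3P.
by move=> h; rewrite h andbT; apply: (hv_lt h).
Qed.

Definition UDb T := is_CNM T && upper_diagonal T.

Lemma UDbP T : 0 < n -> reflect (good n (hv T)) (UDb T).
Proof. by move=> n0; apply: (iffP idP); move/(UD_good T n0). Qed.

Definition tUb (r : nat) T := [exists i : 'I_n, (val i < r) && hv T i (n.-1 - r)].

Lemma tUbP T r : r < n -> reflect (above (hv T) r (n.-1 - r)) (tUb r T).
Proof.
move=> rn; apply: (iffP existsP).
  by case=> i /andP[lt h]; exists (val i).
case=> i lt h; have iN : i < n by lia.
by exists (Ordinal iN); rewrite /= lt.
Qed.

End Plumb.

Lemma swpKf n r S : swp n r (swp n r S) = S.
Proof.
by apply: functional_extensionality => i; apply: functional_extensionality => j; rewrite swpK.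
Qed.

Section SwapCard.
Variables n r : nat.
Hypothesis rn : r.+1 < n.
Let n0 : 0 < n. Proof. lia. Qed.
Let e1 : n.-1 - r = (n - 2 - r).+1. Proof. lia. Qed.
Let e2 : n.-1 - r.+1 = n - 2 - r. Proof. lia. Qed.

Lemma card_swap :
  #|[set T : {set 'I_n * 'I_n} | [&& UDb T, ~~ tUb r T, tUb r.+1 T & ~~ hv T r (n - 2 - r)]]| =
  #|[set T : {set 'I_n * 'I_n} | [&& UDb T, tUb r T & ~~ tUb r.+1 T]]|.
Proof.
pose f := fun T : {set 'I_n * 'I_n} => mk n (swp n r (hv T)).
apply: (card_bij (f := f) (g := f)).
- move=> T; rewrite inE => /and4P[/(UDbP _ n0) gS /(tUbP _ (ltnW rn)) na /(tUbP _ rn) ab nd].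
  rewrite e1 in na; rewrite e2 in ab.
  have [g' ab' nab'] := LU_swap gS rn na ab nd.
  rewrite inE /f; apply/and3P; split.
  + by apply/(UDbP _ n0); rewrite hv_mk_good.
  + by apply/(tUbP _ (ltnW rn)); rewrite hv_mk_good // e1.
  + by apply/negP=> /(tUbP _ rn); rewrite hv_mk_good // e2.
- move=> T; rewrite inE => /and3P[/(UDbP _ n0) gS /(tUbP _ (ltnW rn)) ab /(tUbP _ rn) na].
  rewrite e1 in ab; rewrite e2 in na.
  have [g' nab' ab' nd'] := UL_swap gS rn ab na.
  rewrite inE /f; apply/and4P; split.
  + by apply/(UDbP _ n0); rewrite hv_mk_good.
  + by apply/negP=> /(tUbP _ (ltnW rn)); rewrite hv_mk_good // e1.
  + by apply/(tUbP _ rn); rewrite hv_mk_good // e2.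
  + by rewrite hv_mk_good.
- move=> T; rewrite inE => /and4P[/(UDbP _ n0) gS /(tUbP _ (ltnW rn)) na /(tUbP _ rn) ab nd].
  rewrite e1 in na; rewrite e2 in ab.
  have [g' _ _] := LU_swap gS rn na ab nd.
  by rewrite /f hv_mk_good // swpKf mk_hv.
- move=> T; rewrite inE => /and3P[/(UDbP _ n0) gS /(tUbP _ (ltnW rn)) ab /(tUbP _ rn) na].
  rewrite e1 in ab; rewrite e2 in na.
  have [g' _ _ _] := UL_swap gS rn ab na.
  by rewrite /f hv_mk_good // swpKf mk_hv.
Qed.

End SwapCard.

Definition noD2 n k (T : {set 'I_n * 'I_n}) :=
  [forall s : 'I_n, (val s < k) ==> ~~ has_vtx T (val s) (n - 2 - val s)].

Lemma noD2P n k (T : {set 'I_n * 'I_n}) : k <= n ->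
  reflect (forall s, s < k -> ~~ hv T s (n - 2 - s)) (noD2 k T).
Proof.
move=> kn; apply: (iffP forallP).
  move=> h s sk; have sn : s < n by lia.
  by have := h (Ordinal sn); rewrite /= sk.
by move=> h s; apply/implyP=> sk; apply: h.
Qed.

Section CherryCard.
Variables m r j : nat.
Hypothesis m0 : 0 < m.
Hypothesis rm : r < m.
Hypothesis jr : j <= r.

Definition Qc (T : {set 'I_m * 'I_m}) :=
  [forall s : 'I_m, ((val s < j) && ((val s).+1 < r)) ==> ~~ hv T s (m - 2 - s)].

Lemma QcP T : reflect (forall s, s < j -> s.+1 < r -> ~~ hv T s (m - 2 - s)) (Qc T).
Proof.
apply: (iffP forallP).
  move=> h s sj sr; have sn : s < m by lia.
  by have := h (Ordinal sn); rewrite /= sj sr.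
by move=> h s; apply/implyP=> /andP[sj sr]; apply: h.
Qed.

Lemma ins_D2 S s : s < r -> ins m r S s (m.+1 - 2 - s) = (s.+1 < r) && S s (m - 2 - s).
Proof.
move=> sr; rewrite /ins.
have -> : (s == r.+1) = false by apply/negbTE; lia.
case: (ltnP s.+1 r) => h.
  have -> : (m.+1 - 2 - s == (m.-1 - r).+1) = false by apply/negbTE; lia.
  rewrite /sh; have -> : (r.+1 < s) = false by apply/negbTE; lia.
  have -> : ((m.-1 - r).+1 < m.+1 - 2 - s) = true by lia.
  by have -> : (m.+1 - 2 - s).-1 = m - 2 - s by lia.
have -> : (m.+1 - 2 - s == (m.-1 - r).+1) = true by apply/eqP; lia.
by apply/negbTE; lia.
Qed.

Lemma del_D2 S s : s.+1 < r -> del m r S s (m - 2 - s) = S s (m.+1 - 2 - s).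
Proof.
move=> sr; rewrite /del /un.
have -> : (r.+1 <= s) = false by apply/negbTE; lia.
have -> : ((m.-1 - r).+1 <= m - 2 - s) = true by lia.
by have -> : (m - 2 - s).+1 = m.+1 - 2 - s by lia.
Qed.

Lemma card_cherry :
  #|[set T : {set 'I_m.+1 * 'I_m.+1} | [&& UDb T, hv T r (m.+1 - 2 - r) & noD2 j T]]| =
  #|[set T : {set 'I_m * 'I_m} | UDb T && Qc T]|.
Proof.
have m1 : 0 < m.+1 by [].
have jm : j <= m.+1 by lia.
have ec : m.+1 - 2 - r = m.-1 - r by lia.
apply: (card_bij (f := fun T => mk m (del m r (hv T)))
                 (g := fun T => mk m.+1 (ins m r (hv T)))).
- move=> T; rewrite inE => /and3P[/(UDbP _ m1) gS D /(noD2P _ jm) nd].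
  rewrite ec in D.
  have gd := good_del rm gS D.
  rewrite inE; apply/andP; split.
    by apply/(UDbP _ m0); rewrite hv_mk_good.
  apply/QcP=> s sj sr; rewrite hv_mk_good // del_D2 //; exact: (nd s sj).
- move=> T; rewrite inE => /andP[/(UDbP _ m0) gS /QcP q].
  have gi := good_ins rm gS.
  rewrite inE; apply/and3P; split.
  + by apply/(UDbP _ m1); rewrite hv_mk_good.
  + rewrite hv_mk_good // ec /ins.
    have -> : (r == r.+1) = false by apply/negbTE; lia.
    have -> : (m.-1 - r == (m.-1 - r).+1) = false by apply/negbTE; lia.
    by rewrite !sh_small //; apply: (Src_small rm gS).
  + apply/(noD2P _ jm) => s sj; rewrite hv_mk_good // ins_D2; last lia.
    by case: (ltnP s.+1 r) => //= h; apply: q.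
- move=> T; rewrite inE => /and3P[/(UDbP _ m1) gS D _].
  rewrite ec in D.
  have gd := good_del rm gS D.
  rewrite hv_mk_good //.
  have -> : ins m r (del m r (hv T)) = hv T.
    by apply: functional_extensionality => i; apply: functional_extensionality => k; apply: ins_del.
  exact: mk_hv.
- move=> T; rewrite inE => /andP[/(UDbP _ m0) gS _].
  have gi := good_ins rm gS.
  rewrite hv_mk_good //.
  have -> : del m r (ins m r (hv T)) = hv T.
    by apply: functional_extensionality => i; apply: functional_extensionality => k; apply: del_ins.
  exact: mk_hv.
Qed.

End CherryCard.

Lemma card_split (T : finType) (P Q : pred T) :
  #|[set x | P x]| = #|[set x | P x && Q x]| + #|[set x | P x && ~~ Q x]|.
Proof.
rewrite -(cardID [set x | Q x] [set x | P x]); congr (_ + _); apply: eq_card => x;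
by rewrite !inE // andbC.
Qed.

Lemma card_eqP (T : finType) (P Q : pred T) :
  (forall x, P x = Q x) -> #|[set x | P x]| = #|[set x | Q x]|.
Proof. by move=> h; apply: eq_card => x; rewrite !inE h. Qed.

Definition u n := #|[set T : {set 'I_n * 'I_n} | UDb T]|.

Section Count.
Variable n : nat.
Implicit Types T : {set 'I_n * 'I_n}.

Lemma tUb0 T : tUb 0 T = false.
Proof. by apply/existsP; case=> i; rewrite ltn0. Qed.

Lemma tUbn T : 1 < n -> UDb T -> tUb n.-1 T.
Proof.
move=> n1 /(UDbP _ (ltnW n1)) gS; apply/(tUbP _ (_ : n.-1 < n)); first lia.
have nn : n.-1 < n by lia.
have d := gooddiag gS nn.
have nz : (0 < n.-1) || (0 < n.-1 - n.-1) by apply/orP; left; lia.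
have [[ab|[j' lt _]] _] := goodx gS d nz; first by [].
lia.
Qed.

Lemma D2_types T r : r.+1 < n -> UDb T -> hv T r (n - 2 - r) -> ~~ tUb r T && tUb r.+1 T.
Proof.
move=> rn /(UDbP _ (_ : 0 < n)) gS; have gS' : good n (hv T) by apply: gS; lia.
move=> D; have [na ab] := D2_LU gS' rn D.
apply/andP; split.
  by apply/negP=> /(tUbP _ (ltnW rn)); have -> : n.-1 - r = (n - 2 - r).+1 by lia.
by apply/(tUbP _ rn); have -> : n.-1 - r.+1 = n - 2 - r by lia.
Qed.

End Count.

Lemma u_rec m : 0 < m -> u m.+1 = m * u m.
Proof.
move=> m0.
pose X r := #|[set T : {set 'I_m.+1 * 'I_m.+1} | UDb T && tUb r T]|.
have D2c r : r < m -> #|[set T : {set 'I_m.+1 * 'I_m.+1} | UDb T && hv T r (m.+1 - 2 - r)]| = u m.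
  move=> rm; have := card_cherry m0 rm (leq0n r).
  rewrite /u => e.
  transitivity #|[set T : {set 'I_m.+1 * 'I_m.+1} | [&& UDb T, hv T r (m.+1 - 2 - r) & noD2 0 T]]|.
    apply: card_eqP => T.
    have -> : noD2 0 T = true by apply/forallP=> s; rewrite ltn0.
    by rewrite andbT.
  rewrite e; apply: card_eqP => T.
  have -> : Qc r 0 T = true by apply/forallP=> s; rewrite ltn0.
  by rewrite andbT.
have step r : r < m -> X r.+1 = X r + u m.
  move=> rm; have rm1 : r.+1 < m.+1 by lia.
  rewrite /X (card_split _ (fun T => tUb r T)).
  rewrite [X in _ = X + _](card_split _ (fun T => tUb r.+1 T)).
  rewrite (card_split (fun T => UDb T && tUb r.+1 T && ~~ tUb r T)
                      (fun T => hv T r (m.+1 - 2 - r))).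
  have e1 : #|[set T : {set 'I_m.+1 * 'I_m.+1} | UDb T && tUb r.+1 T && tUb r T]| =
            #|[set T : {set 'I_m.+1 * 'I_m.+1} | UDb T && tUb r T && tUb r.+1 T]|.
    by apply: card_eqP => T; case: (UDb T); case: (tUb r T); case: (tUb r.+1 T).
  have e2 : #|[set T : {set 'I_m.+1 * 'I_m.+1} |
               UDb T && tUb r.+1 T && ~~ tUb r T && hv T r (m.+1 - 2 - r)]| = u m.
    rewrite -(D2c r rm); apply: card_eqP => T.
    case U : (UDb T) => //=; case D : (hv T r (m.+1 - 2 - r)); rewrite ?andbF ?andbT //.
    by have /andP[-> ->] := D2_types rm1 U D.
  have e3 : #|[set T : {set 'I_m.+1 * 'I_m.+1} |
               UDb T && tUb r.+1 T && ~~ tUb r T && ~~ hv T r (m.+1 - 2 - r)]| =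
            #|[set T : {set 'I_m.+1 * 'I_m.+1} | UDb T && tUb r T && ~~ tUb r.+1 T]|.
    transitivity #|[set T : {set 'I_m.+1 * 'I_m.+1} | [&& UDb T, tUb r T & ~~ tUb r.+1 T]]|;
      last by apply: card_eqP => T; rewrite andbA.
    rewrite -(card_swap rm1); apply: card_eqP => T.
    by case: (UDb T); case: (tUb r T); case: (tUb r.+1 T); case: (hv T r _).
  by rewrite e1 e2 e3 [u m + _]addnC addnA.
have X0 : X 0 = 0.
  rewrite /X; apply/eqP; rewrite cards_eq0; apply/eqP/setP=> T.
  by rewrite !inE tUb0 andbF.
have Xm : X m = u m.+1.
  rewrite /X /u; apply: card_eqP => T.
  by case U : (UDb T) => //=; apply: (tUbn (_ : 1 < m.+1) U).
have Xr : forall r, r <= m -> X r = r * u m.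
  elim=> [|r IH] rm; first by rewrite X0.
  by rewrite step // IH; [rewrite mulSn addnC | lia].
by rewrite -Xm Xr.
Qed.

Section Alg.
Import GRing.Theory.
Local Open Scope ring_scope.

Definition F (n k : nat) : int :=
  \sum_(0 <= j < k.+1) ((-1) ^+ j * ('C(k - j, j) * (n - 2 - j)`!)%:Z : int).

Lemma pascal' k i : (i <= k.+1)%N -> 'C(k.+1 - i, i.+1) = ('C(k - i, i.+1) + 'C(k - i, i))%N.
Proof.
move=> h; case: (leqP i k) => h2.
  by rewrite subSn // binS.
have -> : i = k.+1 by apply/eqP; rewrite eqn_leq h h2.
by rewrite subnn (_ : k - k.+1 = 0)%N ?bin0n //; apply/eqP; rewrite subn_eq0.
Qed.

Lemma F0 n : F n 0 = ((n - 2)`!)%:Z.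
Proof. by rewrite /F big_nat1 expr0 mul1r subn0 bin0 mul1n subn0. Qed.

Lemma F1 n : F n 1 = ((n - 2)`!)%:Z.
Proof.
rewrite /F big_nat_recr //= big_nat1 expr0 mul1r subn0 bin0 mul1n subn0.
by rewrite subnn bin0n /= mul0n mulr0 addr0.
Qed.

Lemma F_rec n k : F n k.+2 = F n k.+1 - F n.-1 k.
Proof.
rewrite /F !big_mkord big_ord_recl [X in _ = X - _]big_ord_recl /=.
rewrite !subn0 !bin0 !mul1n !expr0 !mul1r -addrA; congr (_ + _).
have tm (i : 'I_k.+2) : ((-1) ^+ (bump 0 i) * ('C(k.+2 - bump 0 i, bump 0 i) * (n - 2 - bump 0 i)`!)%:Z : int)
   = (-1) ^+ i.+1 * ('C(k - i, i.+1) * (n - 2 - i.+1)`!)%:Z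
     - (-1) ^+ i * ('C(k - i, i) * (n.-1 - 2 - i)`!)%:Z.
  have hi := ltn_ord i.
  rewrite /bump leq0n add1n subSS pascal' // mulnDl PoszD mulrDr exprS mulN1r.
  by rewrite mulNr (_ : (n.-1 - 2 - i = n - 2 - i.+1)%N) //; lia.
rewrite (eq_bigr _ (fun i _ => tm i)) sumrB.
rewrite [X in X - _ = _]big_ord_recr [X in _ - X = _]big_ord_recr /=.
rewrite (_ : k - k.+1 = 0)%N; last by apply/eqP; rewrite subn_eq0.
rewrite !bin0n /= !mul0n !mulr0 !addr0.
by congr (_ - _).
Qed.

End Alg.

Lemma u1 : u 1 = 1.
Proof.
rewrite /u.
suff -> : [set T : {set 'I_1 * 'I_1} | UDb T] = [set [set: 'I_1 * 'I_1]] by rewrite cards1.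
apply/setP=> T; rewrite !inE.
apply/idP/eqP.
  move/(UDbP _ (isT : 0 < 1)) => gS.
  have /hvP [p [pT _ _]] := good00 gS.
  apply/setP=> q; rewrite inE.
  suff -> : q = p by [].
  by case: p q {pT} => [[[|?] ?] [[|?] ?]] [[[|?] ?] [[|?] ?]] //; congr pair; apply: val_inj.
move=> ->; apply/(UDbP _ (isT : 0 < 1)).
have -> : [set: 'I_1 * 'I_1] = mk 1 (fun _ _ => true) by apply/setP=> p; rewrite !inE.
have hv1 i j : hv (mk 1 (fun _ _ => true)) i j = (i < 1) && (j < 1).
  by rewrite hv_mk andbT.
have e : hv (mk 1 (fun _ _ => true)) = fun i j => (i < 1) && (j < 1).
  by apply: functional_extensionality => i; apply: functional_extensionality => j.
rewrite e; split => //.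
- by move=> i j /andP[]; lia.
- by move=> i; rewrite ltnS leqn0 => /eqP ->.
- by move=> i j /andP[]; rewrite !ltnS !leqn0 => /eqP -> /eqP ->.
Qed.

Lemma u_fact m : 0 < m -> u m = (m.-1)`!.
Proof.
elim: m => [//|m IH] _; case: (posnP m) => [->|m0]; first by rewrite u1.
by rewrite u_rec // IH //= -{1}(prednK m0) -factS prednK.
Qed.

Definition A m k := #|[set T : {set 'I_m * 'I_m} | UDb T && noD2 k T]|.

Lemma A0 m : A m 0 = u m.
Proof.
rewrite /A /u; apply: card_eqP => T.
have -> : noD2 0 T = true by apply/forallP=> s; rewrite ltn0.
by rewrite andbT.
Qed.

Lemma f_A m k : 0 < m -> k < m -> f_count m.+1 k = A m k.-1.
Proof.
move=> m0 km.
have := card_cherry m0 km (leqnn k).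
rewrite /f_count /A => e.
transitivity #|[set T : {set 'I_m.+1 * 'I_m.+1} | [&& UDb T, hv T k (m.+1 - 2 - k) & noD2 k T]]|.
  apply: card_eqP => T; rewrite /UDb /hv /noD2.
  by case: (is_CNM T); case: (upper_diagonal T); case: (has_vtx T k _); case: [forall _, _].
rewrite e; apply: card_eqP => T; congr (_ && _).
apply: eq_forallb => s; congr (_ ==> _).
move: (val s) => x; apply/andP/idP; [case=> *; lia | move=> *; split; lia].
Qed.

Lemma A_split m k : k < m -> A m k = A m k.+1 + f_count m k.
Proof.
move=> km.
rewrite /A /f_count (card_split _ (fun T => hv T k (m - 2 - k))) addnC; congr (_ + _); last first.
  apply: card_eqP => T; rewrite /UDb /hv /noD2 -!andbA; by [].
apply: card_eqP => T; rewrite -andbA; congr (_ && _).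
apply/andP/forallP.
  case=> /forallP h hk s; apply/implyP => sk.
  rewrite ltnS leq_eqVlt in sk; case/orP: sk => [/eqP e|sk].
    by move: hk; rewrite /hv -e.
  by move: (h s); rewrite sk.
move=> h; split.
  by apply/forallP=> s; apply/implyP=> sk; move: (h s); rewrite ltnS ltnW.
by have := h (Ordinal km); rewrite /= ltnSn.
Qed.

Section Main.
Import GRing.Theory.
Local Open Scope ring_scope.

Lemma key : forall k n, (2 <= n)%N -> (k <= n - 2)%N -> (f_count n k)%:Z = F n k.
Proof.
suff H : forall k, (forall n, (2 <= n)%N -> (k <= n - 2)%N -> (f_count n k)%:Z = F n k) /\
                   (forall n, (2 <= n)%N -> (k.+1 <= n - 2)%N -> (f_count n k.+1)%:Z = F n k.+1).
  by move=> k; case: (H k).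
elim=> [|k [IH0 IH1]].
  split=> n n2 kn; case: n n2 kn => [|m] // n2 kn; have m0 : (0 < m)%N by lia.
    by rewrite f_A // A0 u_fact // F0; congr (_`!)%:Z; lia.
  by rewrite f_A //; [rewrite A0 u_fact // F1; congr (_`!)%:Z; lia | lia].
split; first exact: IH1.
move=> n n2 kn; case: n n2 kn => [|m] // n2 kn; have m0 : (0 < m)%N by lia.
rewrite F_rec /= -IH1 //; last lia.
rewrite -IH0; [|lia|lia].
rewrite f_A //; last lia.
rewrite f_A //; last lia.
rewrite /= (A_split (_ : (k < m)%N)); last lia.
by rewrite PoszD addrK.
Qed.

End Main.


Unset Implicit Arguments.
Import GRing.Theory.
Local Open Scope ring_scope.

Theorem theorem4p10 (n k : nat) (hn : (2 <= n)%N) (hk : (k <= n - 2)%N) :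
  (f_count n k)%:Z =
  \sum_(0 <= j < k.+1) ((-1) ^+ j * ('C(k - j, j) * (n - 2 - j)`!)%:Z : int).
Proof. exact: (key hn hk). Qed.
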